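(* Let $i\geq 2$ be an integer and let $D$ be an oriented graph (a digraph with no pair of opposite arcs) with $D\in\mathcal{LE}_i$. Then $D$ has a vertex $v$ such that $|N^{++}(v)|\geq |N^+(v)|$, where $N^+(v)$ is the out-neighbourhood of $v$ and $N^{++}(v)=\big(\bigcup_{u\in N^+(v)}N^+(u)\big)\setminus N^+(v)$. (That is, Seymour's Second Neighbourhood Conjecture holds for every digraph in $\mathcal{LE}_i$, $i\ge 2$.)
   Context: All digraphs are finite, without loops or multiple arcs. Paths and cycles are directed; the length of a path or cycle is its number of arcs. A digraph is strong if for every ordered pair of vertices $x,y$ there is a directed path from $x$ to $y$. For a subdigraph $H$ of a digraph $D$, an ear of $H$ in $D$ is either a directed path in $D$ whose two end vertices lie in $H$ and whose internal vertices do not lie in $H$, or a directed cycle in $D$ having exactly one vertex in $H$. An ear decomposition of a strong digraph $D$ is a sequence $(D_0,D_1,\ldots,D_k)$ of strong subdigraphs of $D$ such that $D_0$ is a directed cycle, $D_{j+1}=D_j\cup P_j$ where $P_j$ is an ear of $D_j$ in $D$ for every $j\in\{0,\ldots,k-1\}$, and $D_k=D$. For an integer $i\geq 1$, $\mathcal{LE}_i$ denotes the family of strong digraphs having an ear decomposition in which every ear has length at least $i$. *)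

(* Defs.v *)
From mathcomp Require Import all_boot.
Set Implicit Arguments. Unset Strict Implicit. Unset Printing Implicit Defensive.

Section Digraphs.
Variable T : finType.
Variable E : rel T.

Definition loopless : Prop := irreflexive E.
Definition oriented : Prop := forall x y, E x y -> ~~ E y x.

Definition subdigraph := ({set T} * {set T * T})%type.

Definition whole : subdigraph := ([set: T], [set e | E e.1 e.2]).

Definition strong_sub (H : subdigraph) : bool :=
  [forall x in H.1, forall y in H.1, connect (fun u v => (u, v) \in H.2) x y].

Definition vset (w : seq T) : {set T} := [set v in w].
Definition aset (w : seq T) : {set T * T} := [set e in zip w (behead w)].
(* length = number of arcs *)
Definition wlen (w : seq T) : nat := (size w).-1.

Definition is_dpath (w : seq T) : bool :=
  if w is x :: s then (1 <= size s) && uniq w && path E x s else false.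

(* directed cycle in D, given as w = [v0; v1; ...; v_{k-1}; v0] with
   v0, ..., v_{k-1} distinct, k >= 2 *)
Definition is_dcycle (w : seq T) : bool :=
  if w is x :: s then [&& 2 <= size s, last x s == x, uniq s & path E x s]
  else false.

Definition is_ear (H : subdigraph) (w : seq T) : bool :=
  if w is x :: s then
    (is_dpath w && (x \in H.1) && (last x s \in H.1) &&
       all (fun v => v \notin H.1) (behead (belast x s)))
    || (is_dcycle w && (#|vset w :&: H.1| == 1))
  else false.

Definition add_ear (H : subdigraph) (w : seq T) : subdigraph :=
  (H.1 :|: vset w, H.2 :|: aset w).

(* H = D_j, ps = [P_j; ...; P_{k-1}] : the remaining ears produce
   strong subdigraphs D_{j+1}, ..., D_k with D_k = D *)
Fixpoint ears_from (H : subdigraph) (ps : seq (seq T)) : bool :=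
  if ps is p :: ps' then
    [&& is_ear H p, strong_sub (add_ear H p) & ears_from (add_ear H p) ps']
  else H == whole.

(* D is in LE_i: it has an ear decomposition (D_0, ..., D_k), D_0 a directed
   cycle, in which every ear has length at least i *)
Definition LE (i : nat) : Prop :=
  exists (c : seq T) (ps : seq (seq T)),
    [/\ is_dcycle c, strong_sub (vset c, aset c),
        all (fun p => i <= wlen p) ps & ears_from (vset c, aset c) ps].

Definition Nout (v : T) : {set T} := [set u | E v u].
Definition Nout2 (v : T) : {set T} :=
  (\bigcup_(u in Nout v) Nout u) :\: Nout v.

End Digraphs.

(* Main.v *)
Require Import Defs.
From mathcomp Require Import all_boot.
Set Implicit Arguments. Unset Strict Implicit. Unset Printing Implicit Defensive.

Section Aux.
Variable T : finType.
Variable E : rel T.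

Lemma zip_tail (a : T) s x y : (x, y) \in zip (a :: s) s -> x \in belast a s.
Proof.
elim: s a => [|b s IH] a //=.
rewrite in_cons => /orP [/eqP [-> _]|H]; first by rewrite in_cons eqxx.
by rewrite in_cons (IH _ H) orbT.
Qed.

Lemma zip_func (a : T) s x y1 y2 : uniq (belast a s) ->
  (x, y1) \in zip (a :: s) s -> (x, y2) \in zip (a :: s) s -> y1 = y2.
Proof.
elim: s a => [|b s IH] a //=.
move=> /andP [na u]; rewrite !in_cons.
move=> /orP [/eqP [e1 e2]|H1] /orP [/eqP [e3 e4]|H2].
- by rewrite e2 e4.
- by move: na; rewrite -e1 (zip_tail H2).
- by move: na; rewrite -e3 (zip_tail H1).
- exact: IH H1 H2.
Qed.

Definition Pfun (A : {set T * T}) :=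
  exists x, forall y1 y2, (x, y1) \in A -> (x, y2) \in A -> y1 = y2.

Lemma cycle_uniq (a : T) s : is_dcycle E (a :: s) -> uniq (belast a s).
Proof.
case: s => [|b s] // /and4P [_ /eqP hl u _].
have e : b :: s = rcons (belast b s) (last b s) by rewrite -lastI.
rewrite e rcons_uniq in u; move: u => /andP [na u].
have hl' : last b s = a by exact: hl.
by move: na; rewrite hl' /= => ->.
Qed.

Lemma cycle_func w : is_dcycle E w -> Pfun (aset w).
Proof.
case: w => [|a s] // hc; exists a => y1 y2; rewrite !inE /=.
exact: zip_func (cycle_uniq hc).
Qed.

Definition tinv (H : subdigraph T) := forall a b, (a, b) \in H.2 -> a \in H.1.

Lemma uniq_belast (a : T) s : uniq (a :: s) -> uniq (belast a s).
Proof. by rewrite lastI rcons_uniq => /andP []. Qed.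

Lemma ear_func (H : subdigraph T) p : tinv H -> is_ear E H p -> 2 <= wlen p ->
  Pfun (add_ear H p).2.
Proof.
move=> hi; case: p => [|a s] //.
have fin : forall x, x \notin H.1 -> uniq (belast a s) -> Pfun (add_ear H (a :: s)).2.
  move=> x nx uq; exists x => y1 y2; rewrite /add_ear /= !in_setU /aset !in_set /=.
  move=> /orP [h1|h1] /orP [h2|h2].
  + by move: nx; rewrite (hi _ _ h1).
  + by move: nx; rewrite (hi _ _ h1).
  + by move: nx; rewrite (hi _ _ h2).
  + exact: zip_func uq h1 h2.
rewrite /is_ear => /orP [/andP [/andP [/andP [hp _] _] hall]| /andP [hc hcard]] hw.
- have uq : uniq (belast a s) by apply: uniq_belast; move: hp => /andP [/andP [_ u] _].
  case: s fin hp hall hw uq => [|b [|c s]] // fin hp hall _ uq.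
  apply: (fin b) => //.
  by move: hall => /= /andP [].
- have uq := cycle_uniq hc.
  case: s fin hc hw uq hcard => [|b s] // fin hc hw uq hcard.
  have hab : a != b.
    move: hc => /and4P [_ /eqP hl u _].
    clear fin uq hcard; case: s hw hl u => [|c s] // _ hl /andP [nb _].
    apply/eqP => e; move: nb; rewrite -e -[X in X \in _]hl.
    by rewrite /= mem_last.
  have : exists2 x, x \in [:: a; b] & x \notin H.1.
    case ha: (a \in H.1); last by exists a; rewrite ?inE ?eqxx ?ha.
    case hb: (b \in H.1); last by exists b; rewrite ?inE ?eqxx ?hb ?orbT.
    have : #|[set a; b]| <= #|vset (a :: b :: s) :&: H.1|.
      apply: subset_leq_card; apply/subsetP => z.
      rewrite !inE => /orP [] /eqP ->; rewrite ?ha ?hb ?eqxx ?orbT //.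
    by rewrite cards2 hab (eqP hcard).
  by move=> [x _ nx]; apply: (fin x).
Qed.

Lemma tinv_add H p : tinv H -> tinv (add_ear H p).
Proof.
move=> hi x y; rewrite !inE /= => /orP [h|h]; first by rewrite (hi _ _ h).
apply/orP; right.
case: p h => [|a s] // h.
exact: mem_belast (zip_tail h).
Qed.

Lemma key ps : forall H, tinv H -> all (fun p => 2 <= wlen p) ps ->
  ears_from E H ps -> (ps = [::] -> Pfun H.2) -> Pfun (whole E).2.
Proof.
elim: ps => [|p ps IH] H hi hall he hb.
  have e : H = whole E by apply/eqP.
  by rewrite -e; exact: hb.
case/and3P: he => he _ he'.
case/andP: hall => hw hall.
apply: (IH _ (tinv_add (p:=p) hi) hall he') => e.
exact: ear_func hi he hw.
Qed.

Lemma strong_key ps : forall H, strong_sub H -> ears_from E H ps ->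
  strong_sub (whole E).
Proof.
elim: ps => [|p ps IH] H hs /=; first by move/eqP <-.
by move/and3P => [_ hs' he]; exact: IH hs' he.
Qed.

End Aux.

Theorem mainTheorem1 (i : nat) (T : finType) (E : rel T) :
  2 <= i -> loopless E -> oriented E -> LE E i ->
  exists v : T, #|Nout E v| <= #|Nout2 E v|.
Proof.
move=> hi hl _ [c [ps [hc hs hall he]]].
have hall2 : all (fun p => 2 <= wlen p) ps.
  by apply/allP => p hp; apply: leq_trans hi _; exact: (allP hall p hp).
have hinv : tinv (vset c, aset c).
  move=> a b /=; rewrite !inE.
  case: c {hc hs he} => [|x s] // h.
  exact: mem_belast (zip_tail h).
have [x hx] := key hinv hall2 he (fun _ => cycle_func hc).
have hst := strong_key hs he.
exists x.
case: (pickP (E x)) => [y hy|hn]; last first.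
  have -> : Nout E x = set0 by apply/setP => z; rewrite !inE hn.
  by rewrite cards0.
have hN : Nout E x = [set y].
  apply/setP => z; rewrite !inE; apply/idP/eqP => [h|->//].
  by apply: (hx z y); rewrite inE.
rewrite hN cards1 card_gt0.
have hxy : y != x by apply/eqP => e; move: hy; rewrite e hl.
move: hst => /forallP /(_ y) /implyP /(_ (in_setT _)) /forallP /(_ x)
  /implyP /(_ (in_setT _)) /connectP [q hq hlast].
case: q hq hlast => [|z q] /=; first by move=> _ e; move: hxy; rewrite e eqxx.
move=> /andP [hyz _] _.
move: hyz; rewrite inE /= => hyz.
apply/set0Pn; exists z; rewrite /Nout2 in_setD hN in_set1.
have -> : (z == y) = false by apply/negbTE/eqP => e; move: hyz; rewrite e hl.
rewrite /=; apply/bigcupP; exists y; rewrite ?inE //.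
Qed.
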